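(* Let ${\bf u}\in\mathcal A^{\mathbb N}$ have its language closed under reversal and let $w$ be a palindromic factor of ${\bf u}$. If the graph $\Theta(w)$ is connected, then $m(w)\ge \#E^=(w)-1$; moreover $m(w)>\#E^=(w)-1$ if and only if $\Theta(w)$ contains a cycle, and $m(w)=\#E^=(w)-1$ if and only if $\Theta(w)$ is a tree.
   Context: The language of ${\bf u}$ (set of its finite factors) is closed under reversal if $w$ a factor implies its reversal $\widetilde w$ is a factor; $w$ is a palindrome if $w=\widetilde w$. For a factor $w$: $E^+(w)=\{b: wb\text{ factor}\}$, $E^-(w)=\{a: aw\text{ factor}\}$, $E(w)=\{(a,b): awb\text{ factor}\}$, $E^=(w)=\{a: awa\text{ factor}\}$, and $m(w)=\#E(w)-\#E^+(w)-\#E^-(w)+1$. For a palindromic factor $w$ (so $E^-(w)=E^+(w)$), $\Theta(w)$ is the simple graph with vertex set $E^+(w)$ and edges $\{a,b\}$ for $(a,b)\in E(w)$ with $a\ne b$. *)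

(* Defs.v *)
From HB Require Import structures.
From mathcomp Require Import all_boot all_order all_algebra.
From mathcomp Require Import boolp.
Set Implicit Arguments. Unset Strict Implicit. Unset Printing Implicit Defensive.
Import Order.TTheory GRing.Theory Num.Theory.

Section Words.
Variable A : finType.
Variable u : nat -> A.

Definition factor (w : seq A) : Prop :=
  exists i : nat, w = mkseq (fun k => u (i + k)) (size w).

Definition closed_under_reversal : Prop :=
  forall w : seq A, factor w -> factor (rev w).

Definition palindrome (w : seq A) : Prop := w = rev w.

Definition Eplus (w : seq A) : {set A} := [set b | `[< factor (rcons w b) >]].
Definition Eminus (w : seq A) : {set A} := [set a | `[< factor (a :: w) >]].
Definition Eboth (w : seq A) : {set A * A} :=
  [set p | `[< factor (p.1 :: rcons w p.2) >]].
Definition Eeq (w : seq A) : {set A} := [set a | `[< factor (a :: rcons w a) >]].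

Definition mult (w : seq A) : int :=
  (#|Eboth w|%:Z - #|Eplus w|%:Z - #|Eminus w|%:Z + 1)%R.

(* The simple graph Theta(w): vertex set E^+(w), edge {a,b} iff a <> b and
   (a,b) in E(w) (or (b,a) in E(w), as edges are unordered). *)
Definition theta_adj (w : seq A) : rel A :=
  fun a b => (a != b) && (((a, b) \in Eboth w) || ((b, a) \in Eboth w)).

Definition theta_connected (w : seq A) : Prop :=
  forall a b, a \in Eplus w -> b \in Eplus w -> connect (theta_adj w) a b.

Definition theta_has_cycle (w : seq A) : Prop :=
  exists s : seq A, [/\ 3 <= size s, uniq s & cycle (theta_adj w) s].

Definition theta_is_tree (w : seq A) : Prop :=
  theta_connected w /\ ~ theta_has_cycle w.

End Words.

(* Main.v *)
Require Import Defs.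
From HB Require Import structures.
From mathcomp Require Import all_boot all_order all_algebra.
From mathcomp Require Import boolp zify.
Import Order.TTheory GRing.Theory Num.Theory.
Set Implicit Arguments. Unset Strict Implicit. Unset Printing Implicit Defensive.

Section Graph.
Variables (T : finType) (r : rel T) (V : {set T}) (r0 : T).
Hypotheses (rsym : symmetric r) (rirr : irreflexive r)
  (rV : forall x y, r x y -> x \in V) (r0V : r0 \in V)
  (conn : forall x, x \in V -> connect r x r0).

Fixpoint R n x := if n is m.+1 then R m x || [exists y, r x y && R m y] else x == r0.

Lemma R_path p x : path r x p -> last x p = r0 -> R (size p) x.
Proof.
elim: p x => [|y p IH] x /=; first by move=> _ ->.
case/andP=> rxy pp hl; apply/orP; right; apply/existsP; exists y.
by rewrite rxy IH.
Qed.

Lemma R_ex x : x \in V -> exists n, R n x.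
Proof.
move=> /conn /connectP [p pp hl]; exists (size p); exact: R_path.
Qed.

Definition d x := if pselect (exists n, R n x) is left H then ex_minn H else 0.

Lemma dP x : x \in V -> R (d x) x /\ forall n, R n x -> d x <= n.
Proof.
move/R_ex=> H; rewrite /d; case: pselect => // H'.
by case: ex_minnP => m Hm Hmin; split.
Qed.

Definition par x := odflt x [pick y | r x y && R (d x).-1 y].

Lemma parP x : x \in V -> x != r0 -> [/\ r x (par x), par x \in V & d (par x) < d x].
Proof.
move=> xV xr0; have [Rd Hmin] := dP xV.
case E: (d x) Rd => [|n] /=; first by rewrite (negbTE xr0).
move=> /orP [Rn|/existsP [y /andP [rxy Ry]]].
  by have := Hmin _ Rn; rewrite E ltnn.
rewrite /par E /=; case: pickP => [z /andP [rxz Rz]|/(_ y)]; last by rewrite rxy Ry.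
have zV : z \in V by apply: (rV (y:=x)); rewrite rsym.
split => //; have [_ Hz] := dP zV; exact: Hz.
Qed.

Definition T1 := [set (x, par x) | x in V :\ r0].
Definition T2 := [set (par x, x) | x in V :\ r0].
Definition TT := T1 :|: T2.
Definition E2 := [set q : T * T | r q.1 q.2].
Definition cyc := exists s : seq T, [/\ 3 <= size s, uniq s & cycle r s].

Lemma inT1 a b : (a, b) \in T1 -> [/\ a \in V, a != r0 & b = par a].
Proof. by case/imsetP=> x; rewrite !inE => /andP [xr0 xV] [-> ->]. Qed.
Lemma inT2 a b : (a, b) \in T2 -> [/\ b \in V, b != r0 & a = par b].
Proof. by case/imsetP=> x; rewrite !inE => /andP [xr0 xV] [-> ->]. Qed.

Lemma TT_swap a b : (a, b) \in TT -> (b, a) \in TT.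
Proof.
rewrite !inE => /orP [/inT1 [aV ar0 ->]|/inT2 [bV br0 ->]]; apply/orP.
  by right; apply/imsetP; exists a => //; rewrite !inE ar0.
by left; apply/imsetP; exists b => //; rewrite !inE br0.
Qed.

Lemma TT_sub : TT \subset E2.
Proof.
apply/subsetP => -[a b]; rewrite !inE /= => /orP [/inT1 [aV ar0 ->]|/inT2 [bV br0 ->]].
  by case: (parP aV ar0).
by rewrite rsym; case: (parP bV br0).
Qed.

Lemma card_TT : #|TT| = 2 * (#|V| - 1).
Proof.
have c1 : #|T1| = #|V :\ r0| by apply: card_imset => x y [].
have c2 : #|T2| = #|V :\ r0| by apply: card_imset => x y [].
have cV : #|V| = 1 + #|V :\ r0| by rewrite (cardsD1 r0 V) r0V.
have cI : T1 :&: T2 = set0.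
  apply/setP => -[a b]; rewrite !inE; apply/negP => /andP [/inT1 [aV ar0 eb] /inT2 [bV br0 ea]].
  have [_ _ h1] := parP aV ar0; have [_ _ h2] := parP bV br0.
  rewrite -eb in h1; rewrite -ea in h2.
  by have := ltn_trans h1 h2; rewrite ltnn.
have := cardsUI T1 T2; rewrite cI cards0 addn0 c1 c2 /TT => ->.
rewrite cV; lia.
Qed.

Lemma K1 : cyc -> exists a b, r a b && ((a, b) \notin TT).
Proof.
case=> s [sz us cs].
case: s sz us cs => [|s0 s'] // sz us cs.
have s0s : s0 \in s0 :: s' by rewrite mem_head.
case: (arg_maxnP d s0s) => y ys ymax.
have Hrot := rot_index ys.
move: (drop _ _ ++ take _ _) Hrot => t Hrot.
have ut : uniq (y :: t) by rewrite -Hrot rot_uniq.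
have ct : cycle r (y :: t) by rewrite -Hrot rot_cycle.
have memt z : z \in y :: t -> z \in s0 :: s' by rewrite -Hrot mem_rot.
have szt : size (y :: t) = size (s0 :: s') by rewrite -Hrot size_rot.
case: t Hrot ut ct memt szt => [|z1 [|w t'']] Hrot ut ct memt szt; move: sz; rewrite -szt // => sz.
have ct' : path r y (rcons [:: z1, w & t''] y) := ct.
move: ct'; rewrite rcons_path => /andP [/andP [ryz1 _] rzky].
set zk := last w t'' in rzky.
have z1s : z1 \in s0 :: s' by apply: memt; rewrite !inE eqxx orbT.
have zks : zk \in s0 :: s' by apply: memt; have h := mem_last w t''; by rewrite in_cons in_cons h !orbT.
have z1zk : z1 != zk.
  apply/negP => /eqP e; move: ut; rewrite /= => /and3P [_ /negP nz _].
  by apply: nz; rewrite e mem_last.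
have yV : y \in V by apply: (rV ryz1).
case E1: ((y, z1) \in TT); last by exists y, z1; rewrite ryz1 E1.
case E2': ((zk, y) \in TT); last by exists zk, y; rewrite rzky E2'.
exfalso; move: E1 E2'; rewrite !inE.
move=> /orP [/inT1 [_ yr0 ez1]|/inT2 [z1V z1r0 ey]]; last first.
  have [_ _ h] := parP z1V z1r0; rewrite -ey in h.
  by have := ymax _ z1s; rewrite /= leqNgt h.
move=> /orP [/inT1 [zkV zkr0 ey]|/inT2 [_ _ ezk]].
  have [_ _ h] := parP zkV zkr0; rewrite -ey in h.
  by have := ymax _ zks; rewrite /= leqNgt h.
by move: z1zk; rewrite ez1 ezk eqxx.
Qed.

Lemma K2 a b : r a b -> (a, b) \notin TT -> cyc.
Proof.
move=> rab nab.
pose r' := [rel x y | [&& r x y, (x, y) != (a, b) & (x, y) != (b, a)]].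
have r'sym : symmetric r'.
  move=> x y /=; rewrite rsym; congr (_ && _).
  rewrite andbC; congr (_ && _); apply/negb_inj; rewrite !negbK; apply/eqP/eqP; case=> -> ->//.
have Hc n x : x \in V -> d x <= n -> connect r' x r0.
  elim: n x => [|n IH] x xV dx; (case: (eqVneq x r0) => [->|xr0]; first exact: connect0);
    have [rxp pV dp] := parP xV xr0.
    by have := leq_trans dp dx; rewrite ltn0.
  apply: connect_trans (IH _ pV _); last by rewrite -ltnS (leq_trans dp dx).
  apply: connect1; rewrite /= rxp /=; apply/andP; split; apply/eqP => e.
    by move: nab; rewrite -e !inE; apply/negP/negPn/orP; left; apply/imsetP; exists x; rewrite ?inE ?xr0.
  move: nab; case: e => <- <-; rewrite !inE; apply/negP/negPn/orP; right; apply/imsetP; exists x => //.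
  by rewrite !inE xr0.
have aV : a \in V by apply: rV rab.
have bV : b \in V by apply: (rV (y:=a)); rewrite rsym.
have cab : connect r' a b.
  apply: connect_trans (Hc _ _ aV (leqnn _)) _.
  by rewrite (sym_connect_sym r'sym); apply: Hc bV (leqnn _).
case/connectP: cab => p pp; case: (shortenP pp) => p' pp' up' _ eb.
have ab : a != b by apply/negP => /eqP e; move: rab; rewrite e rirr.
case: p' pp' up' eb => [|c [|c' q]] pp' up' eb.
- by rewrite /= eb eqxx in ab.
- by move: pp'; rewrite /= eb /= eqxx andbF.
exists [:: a, c, c' & q]; split => //.
change (path r a (rcons [:: c, c' & q] a)); rewrite rcons_path -eb rsym rab andbT.
apply: sub_path pp' => x y /= /andP [] //.
Qed.

Lemma graph_count :
  [/\ 2 * (#|V| - 1) <= #|E2|, cyc -> 2 * #|V| <= #|E2| & ~ cyc -> #|E2| = 2 * (#|V| - 1)].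
Proof.
have s1 := subset_leq_card TT_sub; rewrite card_TT in s1.
have V1 : 0 < #|V| by apply/card_gt0P; exists r0.
split => //.
  move=> hc; have [a [b /andP [rab nab]]] := K1 hc.
  have nba : (b, a) \notin TT by apply: contra nab; apply: TT_swap.
  have ab : (a, b) != (b, a) by apply/negP => /eqP [e _]; move: rab; rewrite e rirr.
  have e1 : (a, b) \in E2 by rewrite inE.
  have e2 : (b, a) \in E2 :\ (a, b) by rewrite !inE eq_sym ab /= rsym.
  rewrite (cardsD1 (a, b)) (cardsD1 (b, a) (E2 :\ _)) e1 e2.
  have : TT \subset E2 :\ (a, b) :\ (b, a).
    apply/subsetP => q qT; have := subsetP TT_sub _ qT; rewrite !inE => ->; rewrite andbT.
    by apply/andP; split; apply/eqP => e; [move: nba|move: nab]; rewrite -e qT.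
  move/subset_leq_card; rewrite card_TT; lia.
move=> nc; apply/eqP; rewrite eqn_leq s1 andbT -card_TT; apply: subset_leq_card.
apply/subsetP => -[a b]; rewrite inE /= => rab; apply/negPn/negP => nab.
by apply: nc; apply: K2 rab nab.
Qed.

End Graph.

Section WordsAux.
Variables (A : finType) (u : nat -> A).

Lemma factor_nth s : factor u s <-> exists i, forall k, k < size s -> nth (u 0) s k = u (i + k).
Proof.
split=> [[i ->]|[i H]]; first by exists i => k; rewrite size_mkseq => hk; rewrite nth_mkseq.
exists i; apply: (@eq_from_nth _ (u 0)); rewrite ?size_mkseq // => k hk.
by rewrite nth_mkseq // H.
Qed.

Lemma factor_behead c s : factor u (c :: s) -> factor u s.
Proof.
move/factor_nth=> [i H]; apply/factor_nth; exists i.+1 => k hk.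
by have := H k.+1 hk; rewrite /= addSnnS.
Qed.

Lemma factor_ext w : factor u w -> exists c, factor u (rcons w c).
Proof.
case=> i e; exists (u (i + size w)); exists i.
by rewrite size_rcons mkseqS -e.
Qed.

End WordsAux.


Theorem lemma15 (A : finType) (u : nat -> A) (w : seq A) :
  closed_under_reversal u -> factor u w -> palindrome w ->
  theta_connected u w ->
  [/\ (mult u w >= #|Eeq u w|%:Z - 1)%R,
      (mult u w > #|Eeq u w|%:Z - 1)%R <-> theta_has_cycle u w
    & mult u w = (#|Eeq u w|%:Z - 1)%R <-> theta_is_tree u w].
Proof.
move=> crev fw pw tc.
have Ebsym a b : ((a, b) \in Eboth u w) -> ((b, a) \in Eboth u w).
  rewrite /Eboth !inE /= => /asboolP /crev; rewrite rev_cons rev_rcons -pw => h.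
  by apply/asboolP.
have EmEp : Eminus u w = Eplus u w.
  apply/setP => a; rewrite /Eminus /Eplus !inE; apply/asboolP/asboolP => /crev.
    by rewrite rev_cons -pw.
  by rewrite rev_rcons -pw.
have rsym : symmetric (theta_adj u w).
  by move=> a b; rewrite /theta_adj eq_sym orbC.
have rirr : irreflexive (theta_adj u w) by move=> a; rewrite /theta_adj eqxx.
have rV x y : theta_adj u w x y -> x \in Eplus u w.
  rewrite /theta_adj => /andP [_ /orP [/Ebsym h|h]];
  by move: h; rewrite /Eboth /Eplus !inE /= => /asboolP /factor_behead /asboolP.
have [c fc] := factor_ext fw.
have r0V : c \in Eplus u w by rewrite /Eplus inE; apply/asboolP.
have conn x : x \in Eplus u w -> connect (theta_adj u w) x c by move=> xV; apply: tc.
have [G1 G2 G3] := graph_count rsym rirr rV r0V conn.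
have EbE a b : ((a, b) \in Eboth u w) = `[< factor u (a :: rcons w b) >].
  by rewrite /Eboth in_set.
have EqE a : (a \in Eeq u w) = `[< factor u (a :: rcons w a) >].
  by rewrite /Eeq in_set.
have DE q : (q \in [set q : A * A | q.1 != q.2]) = (q.1 != q.2) by rewrite in_set.
have E2E a b : ((a, b) \in E2 (theta_adj u w)) = theta_adj u w a b.
  by rewrite /E2 in_set.
have cardE : #|Eboth u w| = #|E2 (theta_adj u w)| + #|Eeq u w|.
  rewrite -(cardsID [set q : A * A | q.1 != q.2] (Eboth u w)); congr (_ + _).
    apply: eq_card => -[a b]; rewrite in_setI DE E2E /theta_adj /=.
    case: (eqVneq a b) => [->|ab]; rewrite ?andbF //= andbT.
    by apply/idP/orP => [h|[h|/Ebsym h]] //; left.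
  rewrite -(card_imset (pred_of_set (Eeq u w)) (f := fun a => (a, a))); last by move=> x y [].
  apply: eq_card => -[a b]; rewrite in_setD DE /=; apply/andP/imsetP.
    by move=> [/negPn/eqP <- h]; exists a => //; rewrite EqE -EbE.
  by move=> [x h [-> ->]]; split; rewrite ?eqxx //; move: h; rewrite EqE -EbE.
have v1 : 0 < #|Eplus u w| by apply/card_gt0P; exists c.
rewrite /mult EmEp cardE /theta_is_tree.
change (theta_has_cycle u w) with (cyc (theta_adj u w)).
move: G1 G2 G3 v1 (theta_connected u w) tc; generalize (cyc (theta_adj u w)) => P.
generalize #|E2 (theta_adj u w)| #|Eeq u w| #|Eplus u w| => n2 l v G1 G2 G3 v1 Q q.
split.
- rewrite lerBlDr; lia.
- split => [h|/G2 h]; last lia.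
  case: (pselect P) => // nc; have := G3 nc; lia.
- split => [h|[_ nc]]; last by have := G3 nc; lia.
  split => // hp; have := G2 hp; lia.
Qed.
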